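(* Let $G$ be a quasi-regular mixed lattice group and let $x,y\in G$ with $x\preceq y$. Then for every $u\in G$, $$u\curlywedge x\preceq u\curlywedge y \qquad\text{and}\qquad u\curlyvee x\preceq u\curlyvee y .$$
   Context: A mixed lattice group is a commutative group $G$ with two partial orderings $\le$ (initial order) and $\preceq$ (specific order), both translation invariant ($x\le y\Rightarrow x+z\le y+z$, and likewise for $\preceq$), such that for all $x,y\in G$ the mixed lower envelope $x\curlywedge y=\max\{w\in G: w\preceq x \text{ and } w\le y\}$ and the mixed upper envelope $x\curlyvee y=\min\{w\in G: x\preceq w \text{ and } y\le w\}$ exist, where max and min are taken with respect to $\le$. $G$ is called quasi-regular if the set $G_{sp}=\{x\in G: 0\preceq x\}$ is closed under $\curlywedge$ and $\curlyvee$. *)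

(* Defs.v *)
From mathcomp Require Import all_boot all_algebra.
Set Implicit Arguments. Unset Strict Implicit. Unset Printing Implicit Defensive.
Import GRing.Theory.
Local Open Scope ring_scope.

Section MixedLattice.
Variable G : zmodType.
(* le : initial order  (x <= y);  sle : specific order (x ⪯ y) *)
Variables le sle : G -> G -> Prop.

Definition partial_order (r : G -> G -> Prop) : Prop :=
  (forall x, r x x) /\
  (forall x y, r x y -> r y x -> x = y) /\
  (forall x y z, r x y -> r y z -> r x z).

Definition translation_invariant (r : G -> G -> Prop) : Prop :=
  forall x y z, r x y -> r (x + z) (y + z).

Definition is_mixed_lower (x y w : G) : Prop :=
  sle w x /\ le w y /\ (forall v, sle v x -> le v y -> le v w).

Definition is_mixed_upper (x y w : G) : Prop :=
  sle x w /\ le y w /\ (forall v, sle x v -> le y v -> le w v).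

Definition mixed_lattice_group : Prop :=
  partial_order le /\ partial_order sle /\
  translation_invariant le /\ translation_invariant sle /\
  (forall x y, exists w, is_mixed_lower x y w) /\
  (forall x y, exists w, is_mixed_upper x y w).

(* G_sp = {x | 0 ⪯ x} closed under ⋏ and ⋎ *)
Definition quasi_regular : Prop :=
  forall x y, sle 0 x -> sle 0 y ->
    (forall w, is_mixed_lower x y w -> sle 0 w) /\
    (forall w, is_mixed_upper x y w -> sle 0 w).
End MixedLattice.

(* Main.v *)
Require Import Defs.
From mathcomp Require Import all_boot all_algebra.
Import GRing.Theory.
Local Open Scope ring_scope.

Section Aux.
Variable G : zmodType.

Lemma tr_back {r : G -> G -> Prop} : translation_invariant r ->
  forall x y z, r (x + z) (y + z) -> r x y.
Proof. move=> T x y z H. have := T _ _ (- z) H. by rewrite !addrK. Qed.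

Lemma tr_neg {r : G -> G -> Prop} : translation_invariant r ->
  forall x y, r x y -> r (- y) (- x).
Proof.
move=> T x y H. have := T _ _ (- x - y) H.
have -> : x + (- x - y) = - y by rewrite addrA addrN add0r.
by rewrite addrC addrNK.
Qed.

Variables le sle : G -> G -> Prop.
Hypothesis le_anti : forall x y, le x y -> le y x -> x = y.
Hypothesis le_trans : forall x y z, le x y -> le y z -> le x z.
Hypothesis sle_trans : forall x y z, sle x y -> sle y z -> sle x z.
Hypothesis leT : translation_invariant le.
Hypothesis sleT : translation_invariant sle.
Hypothesis lowE : forall x y, exists w, is_mixed_lower le sle x y w.
Hypothesis qr : forall a b, sle 0 a -> sle 0 b ->
  forall w, is_mixed_lower le sle a b w -> sle 0 w.

Lemma lower_tr a b w z : is_mixed_lower le sle a b w ->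
  is_mixed_lower le sle (a + z) (b + z) (w + z).
Proof.
move=> [H1 [H2 H3]]; split; first exact: sleT.
split; first exact: leT.
move=> v Hv Hl.
have Hv' : sle (v - z) a by apply: (tr_back sleT _ _ z); rewrite addrNK.
have Hl' : le (v - z) b by apply: (tr_back leT _ _ z); rewrite addrNK.
have := leT _ _ z (H3 _ Hv' Hl'). by rewrite addrNK.
Qed.

Lemma lower_mono x y u c w2 : sle x y -> is_mixed_lower le sle u x c ->
  is_mixed_lower le sle u y w2 -> sle c w2.
Proof.
move=> Hxy Hc Hw.
set d := y - x.
have Hd : sle 0 d by have := sleT _ _ (- x) Hxy; rewrite addrN.
have [e He] := lowE u (c + d).
have Hce : sle c e.
  have H1 := lower_tr _ _ _ (- c) He.
  have Hu : sle 0 (u - c).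
    by have := sleT _ _ (- c) (proj1 Hc); rewrite addrN.
  have Hd' : c + d - c = d by rewrite addrC addKr.
  rewrite Hd' in H1.
  have := sleT _ _ c (qr _ _ Hu Hd _ H1). by rewrite add0r addrNK.
have Hxd : x + d = y by rewrite /d addrC addrNK.
have E1 : le e w2.
  apply: (proj2 (proj2 Hw)); first exact: (proj1 He).
  apply: le_trans (proj1 (proj2 He)) _.
  rewrite -Hxd; exact: leT (proj1 (proj2 Hc)).
have E2 : le w2 e.
  apply: (proj2 (proj2 He)); first exact: (proj1 Hw).
  have S1 : sle (w2 - d) u.
    apply: sle_trans (proj1 Hw).
    have := sleT _ _ w2 (tr_neg sleT _ _ Hd). by rewrite oppr0 add0r addrC.
  have L1 : le (w2 - d) x.
    have := leT _ _ (- d) (proj1 (proj2 Hw)).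
    by rewrite -Hxd addrK.
  have := leT _ _ d ((proj2 (proj2 Hc)) _ S1 L1). by rewrite addrNK.
by rewrite -(le_anti _ _ E1 E2).
Qed.
End Aux.
Arguments tr_neg {G r}.

Theorem theorem3p3 (G : zmodType) (le sle : G -> G -> Prop) :
  mixed_lattice_group le sle -> quasi_regular le sle ->
  forall x y : G, sle x y ->
  forall u : G,
    (forall w1 w2, is_mixed_lower le sle u x w1 -> is_mixed_lower le sle u y w2 ->
       sle w1 w2) /\
    (forall w1 w2, is_mixed_upper le sle u x w1 -> is_mixed_upper le sle u y w2 ->
       sle w1 w2).
Proof.
move=> [[_ [la lt]] [[_ [_ st]] [lT [sT [lowE _]]]]] Q.
have qr : forall a b, sle 0 a -> sle 0 b ->
  forall w, is_mixed_lower le sle a b w -> sle 0 w.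
  by move=> a b Ha Hb w Hw; exact: (proj1 (Q a b Ha Hb) w Hw).
move=> x y Hxy u; split.
  by move=> w1 w2; apply: (@lower_mono G le sle la lt st lT sT lowE qr _ _ _ _ _ Hxy).
have conv : forall a b z, is_mixed_upper le sle a b z ->
    is_mixed_lower le sle (- a) (- b) (- z).
  move=> a b z [H1 [H2 H3]]; split; first exact: tr_neg sT _ _ H1.
  split; first exact: tr_neg lT _ _ H2.
  move=> v Hv Hl.
  have := tr_neg lT _ _ (H3 (- v) _ _); rewrite opprK; apply.
    by have := tr_neg sT _ _ Hv; rewrite opprK.
  by have := tr_neg lT _ _ Hl; rewrite opprK.
move=> w1 w2 H1 H2.
have := @lower_mono G le sle la lt st lT sT lowE qr _ _ _ _ _ (tr_neg sT _ _ Hxy) (conv _ _ _ H2) (conv _ _ _ H1).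
by move/(tr_neg sT); rewrite !opprK.
Qed.
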